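(* Let the bifocusing indicator function $\mathfrak{F}_{\mathrm{BFM}}(\mathbf{x},\alpha)$ be as described in the context, and assume $4k|\mathbf{x}-\mathbf{t}_n|\gg1$ and $4k|\mathbf{x}-\mathbf{r}_n|\gg1$ for all $\mathbf{x}\in\Omega$ and all $n$. Then for $0\leq\alpha\leq\pi$, \[\mathfrak{F}_{\mathrm{BFM}}(\mathbf{x},2\pi-\alpha)=\mathfrak{F}_{\mathrm{BFM}}(\mathbf{x},\alpha).\]
   Context: Setting (two-dimensional time-harmonic scattering): $\Omega\subset\mathbb{R}^2$ is a bounded homogeneous background region with vacuum permittivity $\varepsilon_0$ and permeability $\mu_0$; the background wavenumber is $k=\omega\sqrt{\varepsilon_0\mu_0}$. $\Omega$ contains finitely many small, well-separated dielectric inhomogeneities $D_1,\dots,D_M$ with smooth boundaries, $D=\bigcup_m D_m$, with permittivity $\varepsilon(\mathbf{x})=\varepsilon_m>\varepsilon_0$ on $D_m$ and $\varepsilon_0$ elsewhere. $G(\mathbf{x},\mathbf{t})=-\frac{i}{4}H_0^{(1)}(k|\mathbf{x}-\mathbf{t}|)$. The scattered field is given by $u_{\mathrm{scat}}(\mathbf{r},\mathbf{t})\approx k^2\int_D\frac{\varepsilon(\mathbf{z})-\varepsilon_0}{\varepsilon_0\mu_0}G(\mathbf{r},\mathbf{z})G(\mathbf{z},\mathbf{t})\,d\mathbf{z}$. For a bistatic angle $\alpha$ and $n=1,\dots,N$: $\theta_n=2\pi(n-1)/N$, $\mathbf{t}_n=T(\cos\theta_n,\sin\theta_n)$, $\mathbf{r}_n=R(\cos(\theta_n+\alpha),\sin(\theta_n+\alpha))$,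 $T,R>0$. The indicator function is $\mathfrak{F}_{\mathrm{BFM}}(\mathbf{x},\alpha)=\left|\sum_{n=1}^{N}\frac{u_{\mathrm{scat}}(\mathbf{r}_n,\mathbf{t}_n)}{G(\mathbf{t}_n,\mathbf{x})G(\mathbf{r}_n,\mathbf{x})}\right|$, understood (in the far-field regime) through the representation \[\mathfrak{F}_{\mathrm{BFM}}(\mathbf{x},\alpha)=Nk^2\int_D\frac{\varepsilon(\mathbf{z})-\varepsilon_0}{\varepsilon_0\mu_0}\Big[J_0(k(1+\cos\alpha)|\mathbf{x}-\mathbf{z}|)J_0(k\sin\alpha|\mathbf{x}-\mathbf{z}|)+2\sum_{q\ge1}(-1)^qJ_{2q}(k(1+\cos\alpha)|\mathbf{x}-\mathbf{z}|)J_{2q}(k\sin\alpha|\mathbf{x}-\mathbf{z}|)\Big]d\mathbf{z},\] with $J_q$ the Bessel function of the first kind of order $q$. *)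

(* Defs.v *)
From HB Require Import structures.
From mathcomp Require Import all_boot all_order all_algebra.
From mathcomp Require Import all_classical all_reals all_analysis.
Set Implicit Arguments. Unset Strict Implicit. Unset Printing Implicit Defensive.
Import Order.TTheory GRing.Theory Num.Theory.
Import numFieldNormedType.Exports.
Local Open Scope classical_set_scope.
Local Open Scope ring_scope.

Definition rseries {R : realType} (u : nat -> R) : R :=
  limn (fun n => \sum_(0 <= m < n) u m).

Definition besselJ {R : realType} (q : nat) (y : R) : R :=
  rseries (fun m => (-1) ^+ m / ((m`!)%:R * ((m + q)`!)%:R) * (y / 2) ^+ (2 * m + q)).

Definition dist2 {R : realType} (x z : R * R) : R :=
  Num.sqrt ((x.1 - z.1) ^+ 2 + (x.2 - z.2) ^+ 2).

Definition leb2 {R : realType} :=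
  ((@lebesgue_measure R) \x (@lebesgue_measure R))%E.

Definition bfm_kernel {R : realType} (k alpha rho : R) : R :=
  besselJ 0 (k * (1 + cos alpha) * rho) * besselJ 0 (k * sin alpha * rho)
  + 2 * rseries (fun q => (-1) ^+ q.+1
        * besselJ (2 * q.+1) (k * (1 + cos alpha) * rho)
        * besselJ (2 * q.+1) (k * sin alpha * rho)).

(* The bifocusing indicator function, via its far-field representation
   F(x, alpha) = N k^2 int_D (eps(z)-eps0)/(eps0 mu0) [kernel] dz. *)
Definition F_BFM {R : realType} (N : nat) (k eps0 mu0 : R)
    (eps : R * R -> R) (D : set (R * R)) (x : R * R) (alpha : R) : R :=
  N%:R * k ^+ 2 *
  Rintegral leb2 D (fun z => (eps z - eps0) / (eps0 * mu0) * bfm_kernel k alpha (dist2 x z)).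

(* Main.v *)
Require Import Defs.
From HB Require Import structures.
From mathcomp Require Import all_boot all_order all_algebra.
From mathcomp Require Import all_classical all_reals all_analysis.
Import Order.TTheory GRing.Theory Num.Theory.
Import numFieldNormedType.Exports.
Local Open Scope classical_set_scope.
Local Open Scope ring_scope.


Lemma besselJ_even (R : realType) n (y : R) : ~~ odd n -> besselJ n (- y) = besselJ n y.
Proof.
move=> hn; rewrite /besselJ; congr rseries; apply/funext => m.
congr (_ * _); rewrite mulNr exprNn -signr_odd oddD oddM /= (negbTE hn) expr0 mul1r //.
Qed.

Lemma kernel_sym (R : realType) (k a rho : R) :
  bfm_kernel k (2 * pi - a) rho = bfm_kernel k a rho.
Proof.
have hc : cos (2 * pi - a) = cos a.
  by rewrite cosB mulr_natl cos2pi sin2pi mul1r mul0r addr0.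
have hs : sin (2 * pi - a) = - sin a.
  by rewrite sinB mulr_natl cos2pi sin2pi mul1r mul0r sub0r.
rewrite /bfm_kernel hc hs mulrN mulNr besselJ_even //; congr (_ + 2 * _).
congr rseries; apply/funext => q; rewrite besselJ_even //.
by rewrite oddM.
Qed.

Theorem corollary3p2 (R : realType)
    (omega eps0 mu0 : R) (N M : nat)
    (Omega : set (R * R)) (Dm : 'I_M -> set (R * R)) (epsm : 'I_M -> R)
    (eps : R * R -> R) (x : R * R) (alpha : R) :
  0 < omega -> 0 < eps0 -> 0 < mu0 -> (0 < N)%N ->
  (forall m, measurable (Dm m)) ->
  (forall m m', m != m' -> Dm m `&` Dm m' = set0) ->
  (forall m, Dm m `<=` Omega) ->
  (forall m, eps0 < epsm m) ->
  (forall m z, Dm m z -> eps z = epsm m) ->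
  (forall z, ~ (\bigcup_m Dm m) z -> eps z = eps0) ->
  Omega x ->
  0 <= alpha <= pi ->
  let k := omega * Num.sqrt (eps0 * mu0) in
  let D := \bigcup_m Dm m in
  F_BFM N k eps0 mu0 eps D x (2 * pi - alpha) = F_BFM N k eps0 mu0 eps D x alpha.
Proof.
move=> *; rewrite /F_BFM; congr (_ * _); congr (Rintegral _ _ _).
by apply/funext => z; rewrite kernel_sym.
Qed.
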